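(* Let $n,m\ge1$ and $A\subseteq\Omega_n$. Then $\mu_{n+m}(A\times\{0,1\}^m)=\mu_n(A)$.
   Context: For $n\ge1$, $\Omega_n$ is the set of strings $\omega=\alpha_0\alpha_1\cdots\alpha_n$ with $\alpha_k\in\{0,1\}$, $\alpha_0=0$. For $\omega=\alpha_0\cdots\alpha_n$, $\omega'=\alpha'_0\cdots\alpha'_n\in\Omega_n$ let $D^n(\omega,\omega')=2^{-n}\prod_{k=1}^n i^{|\alpha_k-\alpha_{k-1}|}\prod_{k=1}^n i^{-|\alpha'_k-\alpha'_{k-1}|}\,\delta_{\alpha_n\alpha'_n}$ ($i=\sqrt{-1}$), and for $A\subseteq\Omega_n$ let $\mu_n(A)=\sum_{\omega,\omega'\in A}D^n(\omega,\omega')$. For $A\subseteq\Omega_n$, $A\times\{0,1\}^m\subseteq\Omega_{n+m}$ is the set of strings obtained by appending to the right of some $\omega\in A$ an arbitrary string of $m$ bits. *)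

(* Defs.v *)
From mathcomp Require Import all_boot all_order all_algebra algC.
Set Implicit Arguments. Unset Strict Implicit. Unset Printing Implicit Defensive.
Import Order.TTheory GRing.Theory Num.Theory.
Local Open Scope ring_scope.

(* A string alpha_0 alpha_1 ... alpha_n of bits is a finite function 'I_n.+1 -> bool. *)
Notation bstr n := {ffun 'I_n.+1 -> bool}.

Definition bit n (w : bstr n) (k : nat) : bool := w (inord k).

Definition Omega (n : nat) : {set bstr n} := [set w : bstr n | w ord0 == false].

(* i^{|a - b|} for bits a, b *)
Definition ipow (a b : bool) : algC := if a != b then 'i else 1.

Definition Dn (n : nat) (w w' : bstr n) : algC :=
  (2%:R ^- n) *
  (\prod_(1 <= k < n.+1) ipow (bit w k) (bit w k.-1)) *
  (\prod_(1 <= k < n.+1) (ipow (bit w' k) (bit w' k.-1))^-1) *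
  (bit w n == bit w' n)%:R.

Definition mu (n : nat) (A : {set bstr n}) : algC :=
  \sum_(w in A) \sum_(w' in A) Dn w w'.

Lemma ext_le (n m : nat) : (n.+1 <= (n + m).+1)%N.
Proof. by rewrite ltnS leq_addr. Qed.

Definition restr (n m : nat) (w : bstr (n + m)) : bstr n :=
  [ffun i : 'I_n.+1 => w (widen_ord (ext_le n m) i)].

Definition ext (n m : nat) (A : {set bstr n}) : {set bstr (n + m)} :=
  [set w : bstr (n + m) | @restr n m w \in A].

(* Main.v *)
Require Import Defs.
From mathcomp Require Import all_boot all_order all_algebra algC zify ring.
Set Implicit Arguments. Unset Strict Implicit. Unset Printing Implicit Defensive.
Import Order.TTheory GRing.Theory Num.Theory.
Local Open Scope ring_scope.

Definition phi N j (w : bstr N) : algC :=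
  \prod_(1 <= k < j.+1) ipow (bit w k) (bit w k.-1).
Definition psi N j (w : bstr N) : algC :=
  \prod_(1 <= k < j.+1) (ipow (bit w k) (bit w k.-1))^-1.
Definition Q N (E : {set bstr N}) j : algC :=
  \sum_(w in E) \sum_(w' in E) phi j w * psi j w' * (bit w j == bit w' j)%:R.

Lemma mu_Q N (E : {set bstr N}) : mu E = 2%:R ^- N * Q E N.
Proof.
rewrite /mu /Q mulr_sumr; apply: eq_bigr => w _; rewrite mulr_sumr.
by apply: eq_bigr => w' _; rewrite /Dn /phi /psi !mulrA.
Qed.

Definition flip N (i : 'I_N.+1) (w : bstr N) : bstr N :=
  [ffun x => if x == i then ~~ w x else w x].

Lemma flipK N i : cancel (@flip N i) (@flip N i).
Proof. by move=> w; apply/ffunP=> x; rewrite !ffunE; case: eqP => // _; rewrite negbK. Qed.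

Lemma bit_flip N i (w : bstr N) k : (k <= N)%N ->
  bit (flip i w) k = if k == i then ~~ bit w k else bit w k.
Proof.
move=> hk; rewrite /bit ffunE.
have -> : (inord k == i) = (k == i) by rewrite -(inj_eq val_inj) /= inordK.
by [].
Qed.

Lemma phi_flip N (i : 'I_N.+1) j (w : bstr N) : (j < i)%N ->
  phi j (flip i w) = phi j w /\ psi j (flip i w) = psi j w.
Proof.
move=> hj; have hiN := ltn_ord i.
split; apply: eq_big_nat => k /andP[k1 k2];
  rewrite !bit_flip; try lia;
  (case: eqP => [?|_]; first lia); (case: eqP => [?|_]; first lia); by [].
Qed.

Lemma ipow_comb a a' b b' :
  ipow a b * (ipow a' b')^-1 * (a == a')%:R +
  ipow (~~a) b * (ipow a' b')^-1 * (~~a == a')%:R +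
  ipow a b * (ipow (~~a') b')^-1 * (a == ~~a')%:R +
  ipow (~~a) b * (ipow (~~a') b')^-1 * (~~a == ~~a')%:R = 2%:R * (b == b')%:R.
Proof.
have hi := @neq0Ci algC.
have h1 : 'i * 'i^-1 = 1 :> algC by rewrite mulfV.
have h2 : 'i + 'i^-1 = 0 :> algC by rewrite invCi subrr.
have h3 : 'i^-1 + 'i = 0 :> algC by rewrite addrC.
case: a a' b b' => [] [] [] []; rewrite /ipow /= ?invr1 ?mulr1 ?mulr0 ?add0r ?addr0 ?h1 ?mul1r ?h2 ?h3 //.
Qed.

Lemma phiS N j (w : bstr N) :
  phi j.+1 w = phi j w * ipow (bit w j.+1) (bit w j) /\ psi j.+1 w = psi j w * (ipow (bit w j.+1) (bit w j))^-1.
Proof. by split; rewrite /phi /psi big_nat_recr. Qed.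

Lemma Q_step N (E : {set bstr N}) j (hj : (j.+1 <= N)%N) :
  (forall w, (flip (inord j.+1) w \in E) = (w \in E)) ->
  2%:R * Q E j.+1 = Q E j.
Proof.
move=> hE; set i : 'I_N.+1 := inord j.+1.
have vi : (i : nat) = j.+1 by rewrite inordK.
have refl (F : bstr N -> algC) : \sum_(w in E) F w = \sum_(w in E) F (flip i w).
  by rewrite (reindex_inj (can_inj (flipK i))); apply: eq_bigl => w; rewrite hE.
set T := fun w w' : bstr N => phi j.+1 w * psi j.+1 w' * (bit w j.+1 == bit w' j.+1)%:R.
have QT : Q E j.+1 = \sum_(w in E) \sum_(w' in E) T w w' by [].
have e1 : Q E j.+1 = \sum_(w in E) \sum_(w' in E) T (flip i w) w'.
  by rewrite QT (refl (fun w => \sum_(w' in E) T w w')).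
have e2 : Q E j.+1 = \sum_(w in E) \sum_(w' in E) T w (flip i w').
  by rewrite QT; apply: eq_bigr => w _; rewrite (refl (fun w' => T w w')).
have e3 : Q E j.+1 = \sum_(w in E) \sum_(w' in E) T (flip i w) (flip i w').
  by rewrite e1; apply: eq_bigr => w _; rewrite (refl (fun w' => T _ w')).
have e4 : 2%:R * (2%:R * Q E j.+1) = 2%:R * Q E j.
  have -> : 2%:R * (2%:R * Q E j.+1) = Q E j.+1 + Q E j.+1 + Q E j.+1 + Q E j.+1.
    by rewrite mulrA -natrM -[(2*2)%N]/(1+1+1+1)%N !natrD !mulrDl !mul1r.
  rewrite {1}QT {1}e1 {1}e2 e3 -!big_split /= /Q mulr_sumr.
  apply: eq_bigr => w _; rewrite -!big_split /= mulr_sumr.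
  apply: eq_bigr => w' _; rewrite /T.
  have hji : (j < i)%N by rewrite vi.
  case: (phiS j w) => -> _; case: (phiS j w') => _ ->.
  case: (phiS j (flip i w)) => -> _; case: (phiS j (flip i w')) => _ ->.
  case: (phi_flip w hji) => -> _; case: (phi_flip w' hji) => _ ->.
  have bf1 (u : bstr N) : bit (flip i u) j.+1 = ~~ bit u j.+1.
    by rewrite bit_flip //; case: eqP => //; rewrite vi.
  have bf2 (u : bstr N) : bit (flip i u) j = bit u j.
    by rewrite bit_flip; [case: eqP => //; rewrite vi; lia | lia].
  rewrite !bf1 !bf2.
  have hc := ipow_comb (bit w j.+1) (bit w' j.+1) (bit w j) (bit w' j).
  move: hc; set a := bit w j.+1; set a' := bit w' j.+1; set b := bit w j; set b' := bit w' j.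
  move=> hc.
  transitivity (phi j w * psi j w' * (ipow a b * (ipow a' b')^-1 * (a == a')%:R +
    ipow (~~a) b * (ipow a' b')^-1 * (~~a == a')%:R +
    ipow a b * (ipow (~~a') b')^-1 * (a == ~~a')%:R +
    ipow (~~a) b * (ipow (~~a') b')^-1 * (~~a == ~~a')%:R)); first by ring.
  by rewrite hc; ring.
by apply: (mulfI (_ : 2%:R != 0 :> algC)) => //; rewrite pnatr_eq0.
Qed.

Section Ext.
Variables (n m' : nat).
Local Notation m := m'.+1.

Definition tail (w : bstr (n + m)) : {ffun 'I_m -> bool} :=
  [ffun j : 'I_m => w (inord (n.+1 + j))].
Definition glue (u : bstr n) (t : {ffun 'I_m -> bool}) : bstr (n + m) :=
  [ffun i : 'I_(n + m).+1 => if (i <= n)%N then u (inord i) else t (inord (i - n.+1))].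

Lemma restr_glue u t : restr (glue u t) = u.
Proof.
apply/ffunP => x; rewrite !ffunE /= (_ : (x <= n)%N); last by have := ltn_ord x; lia.
by rewrite inord_val.
Qed.

Lemma tail_glue u : cancel (glue u) tail.
Proof.
move=> t; apply/ffunP => j; rewrite !ffunE inordK; last by have := ltn_ord j; lia.
rewrite (_ : (n.+1 + j <= n)%N = false); last by lia.
by rewrite addKn inord_val.
Qed.

Lemma glue_tail u w : restr w = u -> glue u (tail w) = w.
Proof.
move=> <-; apply/ffunP => i; rewrite !ffunE.
have hi := ltn_ord i.
case: leqP => hin.
  by congr (w _); apply: val_inj => /=; rewrite inordK.
congr (w _); apply: val_inj => /=.
rewrite inordK; rewrite inordK; lia.
Qed.

Lemma card_fiber u : #|[pred w : bstr (n + m) | restr w == u]| = (2 ^ m)%N.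
Proof.
have <- : #|[set glue u t | t in [set: {ffun 'I_m -> bool}]]| = (2 ^ m)%N.
  by rewrite card_imset ?cardsT ?card_ffun ?card_bool ?card_ord //; exact: can_inj (@tail_glue u).
apply: eq_card => w; rewrite inE /=; apply/eqP/imsetP.
  by move=> h; exists (tail w); rewrite ?inE // glue_tail.
by case=> t _ ->; rewrite restr_glue.
Qed.

Lemma sum_ext (A : {set bstr n}) (F : bstr n -> algC) :
  \sum_(w in ext m A) F (restr w) = (2 ^ m)%:R * \sum_(u in A) F u.
Proof.
rewrite (partition_big (@restr n m) (mem A)); last by move=> w; rewrite inE.
rewrite mulr_sumr; apply: eq_bigr => u Au.
rewrite (eq_big (fun w => restr w == u) (fun _ => F u)).
- by rewrite sumr_const card_fiber mulr_natl.
- move=> w; rewrite inE; have Au2 : u \in A := Au; by case: (restr w =P u) => [->|_]; rewrite ?andbF // Au2.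
- by move=> w /andP[_ /eqP ->].
Qed.

End Ext.

Lemma flip_ext n m (A : {set bstr n}) k (w : bstr (n + m)) :
  (n < k)%N -> (k <= n + m)%N -> (flip (inord k) w \in ext m A) = (w \in ext m A).
Proof.
move=> h1 h2; rewrite !inE; congr (_ \in A); apply/ffunP => x; rewrite !ffunE.
case: eqP => // /(congr1 val) /=; rewrite inordK; last lia.
by have := ltn_ord x; lia.
Qed.

Lemma Q_iter n m (A : {set bstr n}) d : (d <= m)%N ->
  Q (ext m A) n = 2%:R ^+ d * Q (ext m A) (n + d).
Proof.
elim: d => [|d IH] hd; first by rewrite addn0 expr0 mul1r.
rewrite IH; last lia.
rewrite -(Q_step (j := n + d)); last first.
  by move=> w; apply: flip_ext; lia.
  lia.
by rewrite addnS exprSr mulrA.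
Qed.

Lemma bit_restr n m (w : bstr (n + m)) k : (k <= n)%N -> bit (restr w) k = bit w k.
Proof.
move=> hk; rewrite /bit /restr ffunE; congr (w _); apply: val_inj => /=.
by rewrite !inordK //; lia.
Qed.

Lemma phi_restr n m (w : bstr (n + m)) :
  phi n (restr w) = phi n w /\ psi n (restr w) = psi n w.
Proof.
by split; apply: eq_big_nat => k /andP[k1 k2]; rewrite !bit_restr //; lia.
Qed.

Theorem corollary3p2 (n m : nat) (hn : (1 <= n)%N) (hm : (1 <= m)%N)
  (A : {set bstr n}) (hA : A \subset Omega n) :
  mu (@ext n m A) = mu A.
Proof.
case: m hm => [//|m'] _.
set G := fun u u' : bstr n => phi n u * psi n u' * (bit u n == bit u' n)%:R.
have hQ : Q (ext m'.+1 A) n = (2 ^ m'.+1)%:R * ((2 ^ m'.+1)%:R * Q A n).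
  have -> : Q (ext m'.+1 A) n = \sum_(w in ext m'.+1 A) \sum_(w' in ext m'.+1 A) G (restr w) (restr w').
    apply: eq_bigr => w _; apply: eq_bigr => w' _; rewrite /G.
    case: (phi_restr w) => -> _; case: (phi_restr w') => _ ->.
    by rewrite !bit_restr.
  have -> : \sum_(w in ext m'.+1 A) \sum_(w' in ext m'.+1 A) G (restr w) (restr w') =
     \sum_(w in ext m'.+1 A) (fun u => (2 ^ m'.+1)%:R * \sum_(u' in A) G u u') (restr w).
    by apply: eq_bigr => w _; rewrite (@sum_ext n m' A (G (restr w))).
  by rewrite (@sum_ext n m' A (fun u => (2 ^ m'.+1)%:R * \sum_(u' in A) G u u')) /Q -mulr_sumr.
rewrite !mu_Q.
have hQ2 := Q_iter A (leqnn m'.+1).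
have c0 : (2 : algC) ^+ m'.+1 != 0 by rewrite expf_eq0 pnatr_eq0.
have hE : Q (ext m'.+1 A) (n + m'.+1) = 2 ^+ m'.+1 * Q A n.
  apply: (mulfI c0); rewrite -hQ2 hQ natrX.
  by [].
rewrite hE exprD invfM mulrA -(mulrA _ _ (2 ^+ m'.+1)) mulVf // mulr1.
by [].
Qed.
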